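(* Let $H$ be a group, $K\lneq H$, $\phi\in\operatorname{Aut}(H)$, $G=\langle H,t;\ tkt^{-1}=\phi(k),\ k\in K\rangle$. The map $\overline{\chi_2}:N_H(K)\to\operatorname{Out}_H^{(V)}(G)$ sending $b$ to the outer class of $\alpha_{(\gamma_b,\,b^{-1}\phi(b))}$ is a homomorphism with kernel $JK$, where $J=Z(H)\cap\operatorname{Fix}(\phi)$.
   Context: $\gamma_b$ denotes $h\mapsto b^{-1}hb$; $\operatorname{Fix}(\phi)=\{h\in H:\phi(h)=h\}$. For $\delta\in\operatorname{Aut}(H)$ and $a\in H$ with $\delta(K)=K$ and $\phi(\delta(k))=a^{-1}\delta(\phi(k))a$ for all $k\in K$, $\alpha_{(\delta,a)}$ denotes the automorphism of $G$ given by $h\mapsto\delta(h)$ ($h\in H$), $t\mapsto at$. $\operatorname{Out}_H^{(V)}(G)$ is the subgroup of $\operatorname{Out}(G)$ consisting of the outer classes of the automorphisms $\alpha_{(\gamma_b,a)}$, where $b\in N_H(K)$, $a\in H$ and $ba\phi(b)^{-1}\in C_H(\phi(K))$. Automorphisms are composed left to right. *)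

(* Defs.v *)
From Stdlib Require Import Classical.

Record Group := {
  gcar :> Type;
  gmul : gcar -> gcar -> gcar;
  gone : gcar;
  ginv : gcar -> gcar;
  gmulA : forall x y z, gmul x (gmul y z) = gmul (gmul x y) z;
  gmul1 : forall x, gmul gone x = x;
  gmulV : forall x, gmul (ginv x) x = gone
}.

Arguments gmul {g} _ _.
Arguments gone {g}.
Arguments ginv {g} _.

Declare Scope grp_scope.
Delimit Scope grp_scope with grp.
Infix "*" := gmul : grp_scope.
Notation "x ^-1" := (ginv x) (at level 3, left associativity, format "x ^-1") : grp_scope.
Notation "1" := gone : grp_scope.
Open Scope grp_scope.

Definition is_hom {A B : Group} (f : A -> B) : Prop :=
  forall x y, f (x * y) = f x * f y.

Definition is_aut {A : Group} (f : A -> A) : Prop :=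
  is_hom f /\ exists g : A -> A, (forall x, g (f x) = x) /\ (forall x, f (g x) = x).

Definition is_subgroup {A : Group} (K : A -> Prop) : Prop :=
  K 1 /\ (forall x y, K x -> K y -> K (x * y)) /\ (forall x, K x -> K (x^-1)).

Definition proper {A : Group} (K : A -> Prop) : Prop := exists h : A, ~ K h.

Definition gam {A : Group} (b : A) : A -> A := fun h => b^-1 * h * b.

Definition normalizer {A : Group} (K : A -> Prop) (b : A) : Prop :=
  forall x, K x <-> K (b^-1 * x * b).

Definition center {A : Group} (z : A) : Prop := forall h : A, z * h = h * z.
Definition Fix {A : Group} (phi : A -> A) (h : A) : Prop := phi h = h.
Definition Jset {A : Group} (phi : A -> A) (j : A) : Prop := center j /\ Fix phi j.

Definition prodset {A : Group} (P Q : A -> Prop) (x : A) : Prop :=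
  exists p q, P p /\ Q q /\ x = p * q.

(* G = < H, t ; t k t^-1 = phi(k), k in K >, characterised by its universal
   property: iH : H -> G homomorphism and t : G satisfy the relations, and for
   every group X, homomorphism f : H -> X and x : X satisfying the relations
   there is exactly one homomorphism G -> X extending f and sending t to x. *)
Definition is_HNN (H : Group) (K : H -> Prop) (phi : H -> H)
  (G : Group) (iH : H -> G) (t : G) : Prop :=
  is_hom iH /\
  (forall k, K k -> t * iH k * t^-1 = iH (phi k)) /\
  (forall (X : Group) (f : H -> X) (x : X),
     is_hom f ->
     (forall k, K k -> x * f k * x^-1 = f (phi k)) ->
     (exists g : G -> X, is_hom g /\ (forall h, g (iH h) = f h) /\ g t = x) /\
     (forall g1 g2 : G -> X,
        is_hom g1 -> (forall h, g1 (iH h) = f h) -> g1 t = x ->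
        is_hom g2 -> (forall h, g2 (iH h) = f h) -> g2 t = x ->
        forall y, g1 y = g2 y)).

Definition is_alpha {H G : Group} (iH : H -> G) (t : G)
  (delta : H -> H) (a : H) (f : G -> G) : Prop :=
  is_hom f /\ (forall h, f (iH h) = iH (delta h)) /\ f t = iH a * t.

Definition is_inner {G : Group} (f : G -> G) : Prop :=
  exists c : G, forall x, f x = gam c x.

Definition out_eq {G : Group} (f g : G -> G) : Prop :=
  exists c : G, forall x, f x = gam c (g x).

Definition centralizes_img {H : Group} (K : H -> Prop) (phi : H -> H) (z : H) : Prop :=
  forall k, K k -> z * phi k = phi k * z.

Definition in_OutHV {H : Group} (K : H -> Prop) (phi : H -> H)
  {G : Group} (iH : H -> G) (t : G) (f : G -> G) : Prop :=
  exists b a g, normalizer K b /\ centralizes_img K phi (b * a * (phi b)^-1) /\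
    is_alpha iH t (gam b) a g /\ is_aut g /\ out_eq f g.

(* Main.v *)
Require Import Defs.
From Stdlib Require Import Classical ClassicalEpsilon FunctionalExtensionality PropExtensionality ProofIrrelevance List.

Lemma mulVr {A : Group} (x : A) : x * x^-1 = 1.
Proof.
  rewrite <- (gmul1 A (x * x^-1)). rewrite <- (gmulV A (x^-1)) at 1.
  rewrite <- gmulA. rewrite (gmulA A x^-1 x x^-1). rewrite gmulV, gmul1. apply gmulV.
Qed.
Lemma mulr1 {A : Group} (x : A) : x * 1 = x.
Proof. rewrite <- (gmulV A x), gmulA, mulVr. apply gmul1. Qed.
Lemma mulKV {A : Group} (x y : A) : x * (x^-1 * y) = y.
Proof. rewrite gmulA, mulVr. apply gmul1. Qed.
Lemma mulVK {A : Group} (x y : A) : x^-1 * (x * y) = y.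
Proof. rewrite gmulA, gmulV. apply gmul1. Qed.
Lemma mulKl {A : Group} (x y z : A) : x * y = x * z -> y = z.
Proof. intro E. rewrite <- (mulVK x y), E. apply mulVK. Qed.
Lemma inv_uniq {A : Group} (x y : A) : x * y = 1 -> y = x^-1.
Proof. intro E. apply (mulKl x). rewrite E. symmetry; apply mulVr. Qed.
Lemma invinv {A : Group} (x : A) : (x^-1)^-1 = x.
Proof. symmetry. apply inv_uniq. apply gmulV. Qed.
Lemma invM {A : Group} (x y : A) : (x * y)^-1 = y^-1 * x^-1.
Proof. symmetry. apply inv_uniq. rewrite <- gmulA, (gmulA _ y), mulVr, gmul1. apply mulVr. Qed.
Lemma inv1 {A : Group} : (1 : A)^-1 = 1.
Proof. symmetry; apply inv_uniq. apply gmul1. Qed.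
Lemma mulKVr {A : Group} (x y : A) : x * y * y^-1 = x.
Proof. rewrite <- gmulA, mulVr. apply mulr1. Qed.
Lemma mulKr {A : Group} (x y : A) : x * y^-1 * y = x.
Proof. rewrite <- gmulA, gmulV. apply mulr1. Qed.

Ltac gsimpl := repeat progress (rewrite <- ?gmulA; rewrite ?invM, ?invinv, ?inv1, ?gmul1, ?mulr1, ?gmulV, ?mulVr, ?mulKV, ?mulVK).

Lemma hom1 {A B : Group} (f : A -> B) : is_hom f -> f 1 = 1.
Proof. intro hf. apply (mulKl (f 1)). rewrite <- hf, gmul1, mulr1. reflexivity. Qed.
Lemma homV {A B : Group} (f : A -> B) : is_hom f -> forall x, f (x^-1) = (f x)^-1.
Proof. intros hf x. apply inv_uniq. rewrite <- hf, mulVr. apply hom1; auto. Qed.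

Lemma sg1 {A : Group} (S : A -> Prop) : is_subgroup S -> S 1.
Proof. intros [h _]; exact h. Qed.
Lemma sgM {A : Group} (S : A -> Prop) : is_subgroup S -> forall x y, S x -> S y -> S (x * y).
Proof. intros [_ [h _]]; exact h. Qed.
Lemma sgV {A : Group} (S : A -> Prop) : is_subgroup S -> forall x, S x -> S (x^-1).
Proof. intros [_ [_ h]]; exact h. Qed.
Lemma sgMl {A : Group} (S : A -> Prop) : is_subgroup S -> forall x y, S x -> S (x * y) -> S y.
Proof. intros hS x y hx hxy. rewrite <- (mulVK x y). apply sgM; auto. apply sgV; auto. Qed.
Lemma sgMr {A : Group} (S : A -> Prop) : is_subgroup S -> forall x y, S y -> S (x * y) -> S x.
Proof. intros hS x y hy hxy. rewrite <- (mulKVr x y). apply sgM; auto. apply sgV; auto. Qed.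

Definition rep {A : Group} (S : A -> Prop) (y : A) : A :=
  match excluded_middle_informative (S y) with
  | left _ => 1
  | right _ => epsilon (inhabits (1:A)) (fun r => S (y * r^-1))
  end.

Lemma rep_spec {A : Group} (S : A -> Prop) : is_subgroup S -> forall y, S (y * (rep S y)^-1).
Proof.
  intros hS y. unfold rep. destruct (excluded_middle_informative (S y)) as [h|h].
  - rewrite inv1, mulr1; exact h.
  - apply (epsilon_spec (inhabits (1:A)) (fun r => S (y * r^-1))). exists y. rewrite mulVr. apply sg1; auto.
Qed.

Lemma rep_coset {A : Group} (S : A -> Prop) : is_subgroup S -> forall y1 y2, S (y1 * y2^-1) -> rep S y1 = rep S y2.
Proof.
  intros hS y1 y2 h. unfold rep.
  assert (E : S y1 <-> S y2).
  { split; intro q.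
    - apply (sgMl S hS (y1 * y2^-1)); auto. rewrite mulKr. auto.
    - rewrite <- (mulKr y1 y2). apply sgM; auto. }
  destruct (excluded_middle_informative (S y1)) as [h1|h1];
  destruct (excluded_middle_informative (S y2)) as [h2|h2]; try tauto.
  f_equal. extensionality r. apply propositional_extensionality. split; intro q.
  - apply (sgMl S hS (y1 * y2^-1)); auto. rewrite gmulA, mulKr. auto.
  - replace (y1 * r^-1) with ((y1 * y2^-1) * (y2 * r^-1)) by (gsimpl; reflexivity). apply sgM; auto.
Qed.

Lemma rep_one {A : Group} (S : A -> Prop) : is_subgroup S -> forall y, rep S y = 1 <-> S y.
Proof.
  intros hS y. split.
  - intro e. pose proof (rep_spec S hS y) as q. rewrite e, inv1, mulr1 in q. exact q.
  - intro q. unfold rep. destruct (excluded_middle_informative (S y)); tauto.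
Qed.

Lemma rep_idem {A : Group} (S : A -> Prop) : is_subgroup S -> forall y, rep S (rep S y) = rep S y.
Proof.
  intros hS y. apply rep_coset; auto. rewrite <- (invinv (rep S y)) at 1. rewrite <- invM. apply sgV; auto. apply rep_spec; auto.
Qed.

Import ListNotations.
Section Model.
Variable H : Group.
Variable K : H -> Prop.
Variable phi phiinv : H -> H.
Hypothesis HK : is_subgroup K.
Hypothesis phi_hom : is_hom phi.
Hypothesis phiinv_l : forall x, phiinv (phi x) = x.
Hypothesis phiinv_r : forall x, phi (phiinv x) = x.

Lemma phiinv_hom : is_hom phiinv.
Proof. intros x y. rewrite <- (phiinv_r x), <- (phiinv_r y) at 1. rewrite <- phi_hom. apply phiinv_l. Qed.

Definition SS (e : bool) : H -> Prop := if e then K else fun y => K (phiinv y).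
Definition psi (e : bool) : H -> H := if e then phi else phiinv.

Lemma SS_sub e : is_subgroup (SS e).
Proof.
  destruct e; simpl; auto. split; [|split].
  - rewrite <- (hom1 phi phi_hom), phiinv_l. apply sg1; auto.
  - intros x y hx hy. rewrite phiinv_hom. apply sgM; auto.
  - intros x hx. rewrite (homV _ phiinv_hom). apply sgV; auto.
Qed.
Lemma psi_hom e : is_hom (psi e).
Proof. destruct e; simpl; auto using phiinv_hom. Qed.
Lemma psi_S e s : SS e s -> SS (negb e) (psi e s).
Proof. destruct e; simpl; auto. rewrite phiinv_l; auto. Qed.
Lemma psi_psi e s : psi (negb e) (psi e s) = s.
Proof. destruct e; simpl; auto. Qed.

Definition P := (H * list (bool * H))%type.
Definition hd_exp (l : list (bool * H)) : option bool := option_map fst (hd_error l).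
Definition hd_r (l : list (bool * H)) : H := match l with (_, r) :: _ => r | [] => 1 end.

Definition act (e : bool) (p : P) : P :=
  let h0 := fst p in let l := snd p in
  let r := rep (SS e) h0 in let k := h0 * r^-1 in
  if excluded_middle_informative (r = 1 /\ hd_exp l = Some (negb e))
  then (psi e k * hd_r l, tl l) else (psi e k, (e, r) :: l).

Fixpoint vl (l : list (bool * H)) : Prop :=
  match l with
  | [] => True
  | (e, r) :: l' => rep (SS e) r = r /\ ~ (r = 1 /\ hd_exp l' = Some (negb e)) /\ vl l'
  end.

Lemma act_valid e p : vl (snd p) -> vl (snd (act e p)).
Proof.
  destruct p as [h0 l]. unfold act; simpl. intro v.
  destruct (excluded_middle_informative _) as [[c1 c2]|c]; simpl.
  - destruct l as [|[e' r'] l']; simpl in *. discriminate. tauto.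
  - split; [apply rep_idem, SS_sub|]. split; auto.
Qed.

Lemma act_inv e p : vl (snd p) -> act (negb e) (act e p) = p.
Proof.
  destruct p as [h0 l]. intro v. simpl in v.
  unfold act at 2; simpl.
  destruct (excluded_middle_informative _) as [[c1 c2]|c].
  - destruct l as [|[e' r1] l']; simpl in c2. discriminate. injection c2 as ->.
    simpl in v. destruct v as [v1 [v2 v3]].
    unfold act; simpl.
    assert (R : rep (SS (negb e)) (psi e (h0 * (rep (SS e) h0)^-1) * r1) = r1).
    { rewrite <- v1 at 2. apply rep_coset; [apply SS_sub|]. rewrite mulKVr. apply psi_S.
      apply rep_spec, SS_sub. }
    rewrite R. destruct (excluded_middle_informative _) as [c|c]; [tauto|].
    rewrite mulKVr, psi_psi, c1, inv1, mulr1. reflexivity.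
  - unfold act; simpl.
    assert (R : rep (SS (negb e)) (psi e (h0 * (rep (SS e) h0)^-1)) = 1).
    { apply rep_one; [apply SS_sub|]. apply psi_S, rep_spec, SS_sub. }
    rewrite R. destruct (excluded_middle_informative _) as [c'|c'].
    + simpl. rewrite inv1, mulr1, psi_psi, mulKr. reflexivity.
    + exfalso. apply c'. split; auto. simpl. destruct e; reflexivity.
Qed.

Lemma act_L e s h0 l : SS e s ->
  act e (s * h0, l) = (psi e s * fst (act e (h0, l)), snd (act e (h0, l))).
Proof.
  intro hs. unfold act; simpl.
  assert (R : rep (SS e) (s * h0) = rep (SS e) h0).
  { apply rep_coset; [apply SS_sub|]. rewrite mulKVr. auto. }
  rewrite R. destruct (excluded_middle_informative _); simpl;
  rewrite <- gmulA, psi_hom; try rewrite gmulA; reflexivity.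
Qed.

Lemma act_nil e h0 : act e (h0, []) = (psi e (h0 * (rep (SS e) h0)^-1), [(e, rep (SS e) h0)]).
Proof.
  unfold act; simpl. destruct (excluded_middle_informative _) as [[_ c]|c]; [discriminate|reflexivity].
Qed.


Definition Om := {p : P | vl (snd p)}.
Lemma Om_ext (a b : Om) : proj1_sig a = proj1_sig b -> a = b.
Proof. destruct a, b; simpl; intro E; subst. f_equal. apply proof_irrelevance. Qed.

Record perm := Perm { pf : Om -> Om; pg : Om -> Om;
  pgf : forall x, pg (pf x) = x; pfg : forall x, pf (pg x) = x }.

Lemma perm_ext (p q : perm) : (forall x, pf p x = pf q x) -> p = q.
Proof.
  intro E. assert (E2 : forall x, pg p x = pg q x).
  { intro x. rewrite <- (pgf q (pg p x)). rewrite <- E, pfg. reflexivity. }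
  destruct p as [f g a b], q as [f' g' a' b']; simpl in *.
  assert (f = f') by (extensionality x; auto). assert (g = g') by (extensionality x; auto). subst.
  f_equal; apply proof_irrelevance.
Qed.

Definition pmul (p q : perm) : perm.
Proof.
  refine (Perm (fun x => pf p (pf q x)) (fun x => pg q (pg p x)) _ _).
  - intro x. rewrite pgf, pgf. reflexivity.
  - intro x. rewrite pfg, pfg. reflexivity.
Defined.
Definition pone : perm := Perm (fun x => x) (fun x => x) (fun x => eq_refl) (fun x => eq_refl).
Definition pinv (p : perm) : perm := Perm (pg p) (pf p) (pfg p) (pgf p).

Definition PermG : Group.
Proof.
  refine {| gcar := perm; gmul := pmul; gone := pone; ginv := pinv |}.
  - intros; apply perm_ext; reflexivity.
  - intros; apply perm_ext; reflexivity.
  - intros; apply perm_ext; intro w0; simpl. apply pgf.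
Defined.

Definition Lraw (h : H) (p : P) : P := (h * fst p, snd p).

Definition Lperm (h : H) : PermG.
Proof.
  refine (Perm (fun w => exist _ (Lraw h (proj1_sig w)) (proj2_sig w))
               (fun w => exist _ (Lraw (h^-1) (proj1_sig w)) (proj2_sig w)) _ _).
  - intro w; apply Om_ext; destruct w as [[a l] v]; simpl. unfold Lraw; simpl. rewrite mulVK. reflexivity.
  - intro w; apply Om_ext; destruct w as [[a l] v]; simpl. unfold Lraw; simpl. rewrite mulKV. reflexivity.
Defined.

Definition Tperm : PermG.
Proof.
  refine (Perm (fun w => exist _ (act true (proj1_sig w)) (act_valid true _ (proj2_sig w)))
               (fun w => exist _ (act false (proj1_sig w)) (act_valid false _ (proj2_sig w))) _ _).
  - intro w; apply Om_ext; simpl. apply (act_inv true). apply proj2_sig.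
  - intro w; apply Om_ext; simpl. apply (act_inv false). apply proj2_sig.
Defined.

Lemma Lperm_hom : is_hom Lperm.
Proof. intros x y. apply perm_ext; intro w0. apply Om_ext; simpl. unfold Lraw; simpl. rewrite gmulA. reflexivity. Qed.

Lemma Tperm_rel : forall k, K k -> Tperm * Lperm k * Tperm^-1 = Lperm (phi k).
Proof.
  intros k hk. apply perm_ext; intro w. apply Om_ext; simpl.
  destruct w as [[a l] v]; simpl.
  unfold Lraw at 1. simpl. destruct (act false (a, l)) as [a' l'] eqn:Ea. simpl.
  rewrite (act_L true k a' l' hk). rewrite <- Ea. change (act true (act false (a,l))) with (act (negb false) (act false (a,l))). rewrite (act_inv false (a,l) v). reflexivity.
Qed.

End Model.

Definition subgrp (A : Group) (Q : A -> Prop) (h1 : Q 1)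
  (hm : forall x y, Q x -> Q y -> Q (x * y)) (hi : forall x, Q x -> Q (x^-1)) : Group.
Proof.
  refine {| gcar := {x : A | Q x};
            gmul := fun a b => exist _ (proj1_sig a * proj1_sig b) (hm _ _ (proj2_sig a) (proj2_sig b));
            gone := exist _ 1 h1;
            ginv := fun a => exist _ (proj1_sig a)^-1 (hi _ (proj2_sig a)) |}.
  - intros [x ?] [y ?] [z ?]; simpl. apply subset_eq_compat. apply gmulA.
  - intros [x ?]; simpl. apply subset_eq_compat. apply gmul1.
  - intros [x ?]; simpl. apply subset_eq_compat. apply gmulV.
Defined.

Section HNN.
Variable H : Group.
Variable K : H -> Prop.
Variable phi : H -> H.
Variable G : Group.
Variable iH : H -> G.
Variable t : G.
Hypothesis HG : is_HNN H K phi G iH t.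

Lemma iH_hom : is_hom iH.
Proof. apply HG. Qed.
Lemma t_rel : forall k, K k -> t * iH k * t^-1 = iH (phi k).
Proof. apply HG. Qed.

Lemma gen_all (Q : G -> Prop) (h1 : Q 1)
  (hm : forall x y, Q x -> Q y -> Q (x * y)) (hi : forall x, Q x -> Q (x^-1))
  (hH : forall h, Q (iH h)) (ht : Q t) : forall x, Q x.
Proof.
  set (X := subgrp G Q h1 hm hi).
  destruct HG as [hiH [hrel hU]].
  destruct (hU X (fun h => exist _ (iH h) (hH h) : X) (exist _ t ht : X)) as [[g [hg [gH gt]]] _].
  - intros x y. apply subset_eq_compat. apply hiH.
  - intros k hk. apply subset_eq_compat. simpl. apply hrel; auto.
  - destruct (hU G iH t hiH hrel) as [_ uniq].
    intro x. assert (E : x = proj1_sig (g x)).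
    { apply (uniq (fun y => y) (fun y => proj1_sig (g y))); auto.
      - intros a b; reflexivity.
      - intros a b. rewrite hg. reflexivity.
      - intro h. rewrite gH. reflexivity.
      - rewrite gt. reflexivity. }
    rewrite E. apply proj2_sig.
Qed.

Lemma alpha_unique delta a delta' a' f1 f2 :
  is_alpha iH t delta a f1 -> is_alpha iH t delta' a' f2 ->
  (forall h, iH (delta h) = iH (delta' h)) -> iH a = iH a' -> forall y, f1 y = f2 y.
Proof.
  intros [h1 [H1 T1]] [h2 [H2 T2]] Ed Ea.
  destruct HG as [hiH [hrel hU]].
  assert (hf : is_hom (fun h => iH (delta h))).
  { intros x y. rewrite <- !H1. rewrite hiH. apply h1. }
  assert (rel : forall k, K k -> (iH a * t) * iH (delta k) * (iH a * t)^-1 = iH (delta (phi k))).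
  { intros k hk. rewrite <- T1, <- !H1, <- (homV f1 h1), <- !h1. rewrite hrel; auto. }
  destruct (hU G _ _ hf rel) as [_ uniq].
  apply (uniq f1 f2); auto. intro h. rewrite H2. auto. rewrite T2, Ea. reflexivity.
Qed.

Lemma alpha_exists delta a :
  is_hom (fun h => iH (delta h)) ->
  (forall k, K k -> (iH a * t) * iH (delta k) * (iH a * t)^-1 = iH (delta (phi k))) ->
  exists f, is_alpha iH t delta a f.
Proof.
  intros hf rel. destruct HG as [hiH [hrel hU]].
  destruct (hU G _ _ hf rel) as [[g [hg [gH gt]]] _]. exists g. split; auto.
Qed.

End HNN.
Import ListNotations.

Section Main.
Variable H : Group.
Variable K : H -> Prop.
Variable phi phiinv : H -> H.
Hypothesis HK : is_subgroup K.
Hypothesis phi_hom : is_hom phi.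
Hypothesis phiinv_l : forall x, phiinv (phi x) = x.
Hypothesis phiinv_r : forall x, phi (phiinv x) = x.
Variable G : Group.
Variable iH : H -> G.
Variable t : G.
Hypothesis HG : is_HNN H K phi G iH t.

Let SSe := SS H K phiinv.
Let psie := psi H phi phiinv.
Let acte := act H K phi phiinv.
Let hiH := iH_hom H K phi G iH t HG.

Definition tp (e : bool) : G := if e then t else t^-1.
Lemma tp_inv e : tp e * tp (negb e) = 1.
Proof. destruct e; simpl. apply mulVr. apply gmulV. Qed.

Lemma tp_rel e s : SSe e s -> tp e * iH s = iH (psie e s) * tp e.
Proof.
  destruct e; simpl; intro hs.
  - rewrite <- (t_rel H K phi G iH t HG s hs). rewrite mulKr. reflexivity.
  - rewrite <- (phiinv_r s) at 1. rewrite <- (t_rel H K phi G iH t HG _ hs).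
    gsimpl. reflexivity.
Qed.

Fixpoint wl (l : list (bool * H)) : G :=
  match l with [] => 1 | (e, r) :: l' => tp e * (iH r * wl l') end.
Definition word (p : P H) : G := iH (fst p) * wl (snd p).

Lemma word_L h p : word (Lraw H h p) = iH h * word p.
Proof. destruct p; unfold word, Lraw; simpl. rewrite hiH, gmulA. reflexivity. Qed.

Lemma word_act e p : word (acte e p) = tp e * word p.
Proof.
  destruct p as [h0 l]. unfold acte, act, word; simpl.
  set (r := rep (SS H K phiinv e) h0).
  assert (hk : SSe e (h0 * r^-1)) by (apply rep_spec; apply (SS_sub H K phi phiinv); auto).
  assert (E : tp e * iH h0 = iH (psie e (h0 * r^-1)) * tp e * iH r).
  { rewrite <- (mulKr h0 r) at 1. rewrite hiH, gmulA, tp_rel; auto. }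
  destruct (excluded_middle_informative _) as [[c1 c2]|c]; simpl.
  - destruct l as [|[e' r1] l']; simpl in c2. discriminate. injection c2 as ->. simpl.
    rewrite gmulA, E, c1, (hom1 _ hiH), mulr1. rewrite hiH. gsimpl.
    rewrite (gmulA _ (tp e)), tp_inv, gmul1. reflexivity.
  - rewrite (gmulA _ (tp e) (iH h0)), E. gsimpl. reflexivity.
Qed.

Section WithG.
Variable gX : G -> PermG H K phiinv.
Hypothesis hgX : is_hom gX.
Hypothesis gXH : forall h, gX (iH h) = Lperm H K phiinv h.
Hypothesis gXt : gX t = Tperm H K phi phiinv HK phi_hom phiinv_l phiinv_r.

Lemma pf_tp e w : proj1_sig (pf _ _ _ (gX (tp e)) w) = acte e (proj1_sig w).
Proof.
  destruct e; simpl.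
  - rewrite gXt. reflexivity.
  - rewrite (homV _ hgX), gXt. reflexivity.
Qed.

Lemma pf_mul x y w : pf _ _ _ (gX (x * y)) w = pf _ _ _ (gX x) (pf _ _ _ (gX y) w).
Proof. rewrite hgX. reflexivity. Qed.

Lemma Q_all : forall x w, word (proj1_sig (pf _ _ _ (gX x) w)) = x * word (proj1_sig w).
Proof.
  apply (gen_all H K phi G iH t HG (fun x => forall w, word (proj1_sig (pf _ _ _ (gX x) w)) = x * word (proj1_sig w))).
  - intro w. rewrite (hom1 _ hgX). simpl. rewrite gmul1. reflexivity.
  - intros x y hx hy w. rewrite pf_mul, hx, hy, gmulA. reflexivity.
  - intros x hx w. rewrite (homV _ hgX). simpl.
    rewrite <- (pfg _ _ _ (gX x) w) at 2. rewrite hx. gsimpl. reflexivity.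
  - intros h w. rewrite gXH. simpl. apply word_L.
  - intro w. rewrite <- (pf_tp true) || idtac. pose proof (pf_tp true w) as E. simpl in E. rewrite E.
    apply (word_act true).
Qed.


Definition eps : Om H K phiinv := exist (fun p => vl H K phiinv (snd p)) (1, []) I.

Fixpoint rapp (l : list (bool * H)) (p : P H) : P H :=
  match l with [] => p | (e, r) :: l' => acte e (Lraw H r (rapp l' p)) end.

Lemma pf_wl l w : proj1_sig (pf _ _ _ (gX (wl l)) w) = rapp l (proj1_sig w).
Proof.
  induction l as [|[e r] l IH]; simpl.
  - rewrite (hom1 _ hgX). reflexivity.
  - rewrite pf_mul, pf_tp, pf_mul, gXH. simpl. rewrite IH. reflexivity.
Qed.

Lemma inv_lem : forall l, vl H K phiinv l -> forall e1 r1 l', l = (e1, r1) :: l' -> forall h,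
  exists x r2 l2, rapp l (h, []) = (x, (e1, r2) :: l2) /\ SSe (negb e1) x /\
  last ((e1, r2) :: l2) (true, 1) =
    (fst (last l (true, 1)), rep (SSe (fst (last l (true, 1)))) (snd (last l (true, 1)) * h)).
Proof.
  induction l as [|[e r] l1 IH]; intros v e1 r1 l' E h; [discriminate|].
  injection E as Ea Eb Ec; subst e1 r1 l'. destruct v as [v1 [v2 v3]].
  destruct l1 as [|[e' r'] l1'].
  - simpl. unfold acte, Lraw; simpl. rewrite act_nil.
    eexists _, _, _. split; [reflexivity|]. split; [|reflexivity].
    apply (psi_S H K phi phiinv phiinv_l). apply rep_spec; apply (SS_sub H K phi phiinv); auto.
  - destruct (IH v3 e' r' l1' eq_refl h) as (x & r2 & l2 & E1 & Sx & L).
    change (rapp ((e, r) :: (e', r') :: l1') (h, [])) with (acte e (Lraw H r (rapp ((e', r') :: l1') (h, [])))). rewrite E1. unfold acte, Lraw, act; simpl.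
    destruct (excluded_middle_informative _) as [[c1 c2]|c].
    + exfalso. simpl in c2. injection c2 as ->. rewrite Bool.negb_involutive in Sx.
      assert (hS := SS_sub H K phi phiinv HK phi_hom phiinv_l phiinv_r e).
      apply (rep_one _ hS) in c1.
      assert (Sr : SS H K phiinv e r) by (apply (sgMr _ hS r x); [exact Sx|exact c1]).
      apply (rep_one _ hS) in Sr. rewrite v1 in Sr. apply v2. split; auto.
    + eexists _, _, _. split; [reflexivity|]. split.
      * apply (psi_S H K phi phiinv phiinv_l). apply rep_spec; apply (SS_sub H K phi phiinv); auto.
      * simpl. simpl in L. exact L.
Qed.

Lemma conj_lemma {A : Group} (c d y : A) : c^-1 * y * c = d^-1 * y * d -> (c * d^-1) * y = y * (c * d^-1).
Proof.
  intro E. assert (E2 : c * (c^-1 * y * c) * d^-1 = c * (d^-1 * y * d) * d^-1) by (rewrite E; reflexivity).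
  revert E2. gsimpl. intro E2. rewrite E2. reflexivity.
Qed.

Lemma mulr_cancel {A : Group} (x y z : A) : x * y = z * y -> x = z.
Proof. intro E. rewrite <- (mulKVr x y), E. apply mulKVr. Qed.

Lemma kernel_hard_g b c : proper K ->
  (forall h, c^-1 * iH h * c = iH (b^-1 * h * b)) ->
  c^-1 * t * c = iH (b^-1 * phi b) * t -> prodset (Jset phi) K b.
Proof.
  intros Hprop hc1 hc2.
  set (z := c * (iH b)^-1).
  assert (zc : forall h, z * iH h = iH h * z).
  { intro h. apply conj_lemma. rewrite hc1, !hiH, (homV _ hiH). reflexivity. }
  set (w := pf _ _ _ (gX z) eps).
  destruct (proj1_sig w) as [h0 l] eqn:Ew.
  assert (zw : z = iH h0 * wl l).
  { pose proof (Q_all z eps) as Q. fold w in Q. rewrite Ew in Q. unfold word in Q. simpl in Q.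
    rewrite (hom1 _ hiH), gmul1, mulr1 in Q. auto. }
  assert (vlw : vl H K phiinv l).
  { pose proof (proj2_sig w) as q. simpl in q. rewrite Ew in q. exact q. }
  assert (A : forall h, proj1_sig (pf _ _ _ (gX (iH h * z)) eps) = (h * h0, l)).
  { intro h. rewrite pf_mul, gXH. simpl. fold w. rewrite Ew. reflexivity. }
  assert (B : forall h, proj1_sig (pf _ _ _ (gX (z * iH h)) eps) = Lraw H h0 (rapp l (h * 1, []))).
  { intro h. rewrite zw, !pf_mul, gXH. simpl. rewrite pf_wl, gXH. reflexivity. }
  assert (AB : forall h, (h * h0, l) = Lraw H h0 (rapp l (h * 1, []))).
  { intro h. rewrite <- A, <- B, zc. reflexivity. }
  destruct l as [|[e1 r1] l'].
  - simpl in zw.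
    assert (cen : center h0).
    { intro h. pose proof (AB h) as E. unfold Lraw in E. simpl in E. injection E as E. rewrite mulr1 in E. auto. }
    assert (cz : c = iH (h0 * b)).
    { rewrite hiH, <- (mulr1 (iH h0)), <- zw. unfold z. rewrite mulKr. reflexivity. }
    assert (tr : t * iH (h0 * b) = iH (h0 * phi b) * t).
    { rewrite cz in hc2. transitivity (iH (h0 * b) * ((iH (h0 * b))^-1 * t * iH (h0 * b))).
      { gsimpl. reflexivity. }
      rewrite hc2, gmulA, <- hiH. gsimpl. reflexivity. }
    assert (PT : forall v, proj1_sig (pf _ _ _ (gX t) v) = acte true (proj1_sig v)) by apply (pf_tp true).
    pose proof (f_equal (fun x => proj1_sig (pf _ _ _ (gX x) eps)) tr) as E. cbv beta in E.
    rewrite !pf_mul, !PT, !gXH in E. simpl in E. rewrite PT in E. unfold acte, Lraw in E. rewrite !act_nil in E. simpl in E. rewrite !act_nil in E. simpl in E.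
    assert (r1 : rep K 1 = 1) by (apply (rep_one _ HK); apply sg1; auto).
    rewrite r1, inv1, !mulr1, (hom1 _ phi_hom), mulr1 in E.
    injection E as E1 E2.
    assert (Kw : K (h0 * b)) by (apply (rep_one _ HK); exact E2).
    rewrite E2, inv1, mulr1, phi_hom in E1. apply mulr_cancel in E1.
    exists (h0^-1), (h0 * b). split; [|split].
    + split.
      * intro h. apply (mulKl h0). rewrite mulKV, gmulA, cen, mulKVr. reflexivity.
      * unfold Fix. rewrite (homV _ phi_hom), E1. reflexivity.
    + exact Kw.
    + rewrite mulVK. reflexivity.
  - exfalso. set (L := last ((e1, r1) :: l') (true, 1)).
    assert (key : forall h, snd L = rep (SSe (fst L)) (snd L * (h * 1))).
    { intro h. destruct (inv_lem _ vlw e1 r1 l' eq_refl (h * 1)) as (x & r2 & l2 & E1 & _ & LL).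
      pose proof (AB h) as E. rewrite E1 in E. unfold Lraw in E. simpl in E. injection E as _ Er El.
      rewrite <- Er, <- El in LL. unfold L. rewrite LL at 1. reflexivity. }
    assert (hS := SS_sub H K phi phiinv HK phi_hom phiinv_l phiinv_r (fst L)).
    assert (all : forall y, SSe (fst L) y).
    { intro y. apply (rep_one _ hS). pose proof (key ((snd L)^-1 * y)) as k1.
      rewrite mulr1, mulKV in k1. transitivity (snd L); [symmetry; exact k1|].
      pose proof (key ((snd L)^-1)) as k2. rewrite mulr1, mulVr in k2. transitivity (rep (SSe (fst L)) 1); [exact k2|].
      apply (rep_one _ hS). apply sg1; auto. }
    destruct Hprop as [h nh]. apply nh. destruct (fst L); simpl in all.
    + apply all.
    + rewrite <- (phiinv_l h). apply all.
Qed.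

End WithG.

Lemma kernel_hard b c : proper K ->
  (forall h, c^-1 * iH h * c = iH (b^-1 * h * b)) ->
  c^-1 * t * c = iH (b^-1 * phi b) * t -> prodset (Jset phi) K b.
Proof.
  intros hp h1 h2. pose proof HG as [_ [_ hU]].
  destruct (hU (PermG H K phiinv) (Lperm H K phiinv) (Tperm H K phi phiinv HK phi_hom phiinv_l phiinv_r)
     (Lperm_hom H K phiinv) (Tperm_rel H K phi phiinv HK phi_hom phiinv_l phiinv_r)) as [[g [hg [gH gt]]] _].
  exact (kernel_hard_g g hg gH gt b c hp h1 h2).
Qed.

End Main.

Lemma gam_hom {A : Group} (b : A) : is_hom (gam b).
Proof. intros x y. unfold gam. gsimpl. reflexivity. Qed.

Lemma gam1 {A : Group} (x : A) : gam 1 x = x.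
Proof. unfold gam. rewrite inv1, gmul1, mulr1. reflexivity. Qed.

Section Fin.
Variable H : Group.
Variable K : H -> Prop.
Variable phi : H -> H.
Hypothesis phi_hom : is_hom phi.
Variable G : Group.
Variable iH : H -> G.
Variable t : G.
Hypothesis HG : is_HNN H K phi G iH t.
Let hiH := iH_hom H K phi G iH t HG.

Lemma alpha_b_exists b : normalizer K b -> exists f, is_alpha iH t (gam b) (b^-1 * phi b) f.
Proof.
  intro nb. apply (alpha_exists H K phi G iH t HG).
  - intros x y. rewrite gam_hom, hiH. reflexivity.
  - intros k hk.
    transitivity (iH (b^-1 * phi b) * (t * iH (gam b k) * t^-1) * (iH (b^-1 * phi b))^-1).
    { gsimpl. reflexivity. }
    rewrite (t_rel H K phi G iH t HG (gam b k) (proj1 (nb k) hk)).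
    rewrite <- (homV _ hiH), <- !hiH. f_equal. unfold gam.
    rewrite !phi_hom, !(homV _ phi_hom). gsimpl. reflexivity.
Qed.

Lemma alpha_comp b c fb fc :
  is_alpha iH t (gam b) (b^-1 * phi b) fb -> is_alpha iH t (gam c) (c^-1 * phi c) fc ->
  is_alpha iH t (gam (b * c)) ((b * c)^-1 * phi (b * c)) (fun x => fc (fb x)).
Proof.
  intros [hb [Hb Tb]] [hc [Hc Tc]]. split; [|split].
  - intros x y. rewrite hb, hc. reflexivity.
  - intro h. rewrite Hb, Hc. f_equal. unfold gam. gsimpl. reflexivity.
  - rewrite Tb, hc, Hc, Tc, gmulA, <- hiH. f_equal. f_equal. unfold gam.
    rewrite phi_hom. gsimpl. reflexivity.
Qed.

Lemma alpha_id : is_alpha iH t (fun h => h) 1 (fun x => x).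
Proof. split; [|split]. intros x y; reflexivity. intro; reflexivity. rewrite (hom1 _ hiH), gmul1. reflexivity. Qed.

Lemma alpha_inv_id b fb fc :
  is_alpha iH t (gam b) (b^-1 * phi b) fb -> is_alpha iH t (gam (b^-1)) ((b^-1)^-1 * phi (b^-1)) fc ->
  forall x, fc (fb x) = x.
Proof.
  intros ab ac. pose proof (alpha_comp _ _ _ _ ab ac) as cmp.
  apply (alpha_unique H K phi G iH t HG _ _ _ _ _ _ cmp alpha_id).
  - intro h. rewrite mulVr, gam1. reflexivity.
  - rewrite mulVr, inv1, (hom1 _ phi_hom), gmul1. reflexivity.
Qed.

Lemma alpha_inv_id' b fb fc :
  is_alpha iH t (gam b) (b^-1 * phi b) fb -> is_alpha iH t (gam (b^-1)) ((b^-1)^-1 * phi (b^-1)) fc ->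
  forall x, fb (fc x) = x.
Proof.
  intros ab ac. pose proof (alpha_comp _ _ _ _ ac ab) as cmp.
  apply (alpha_unique H K phi G iH t HG _ _ _ _ _ _ cmp alpha_id).
  - intro h. rewrite gmulV, gam1. reflexivity.
  - rewrite gmulV, inv1, (hom1 _ phi_hom), gmul1. reflexivity.
Qed.

Lemma normalizer_inv b : normalizer K b -> normalizer K (b^-1).
Proof.
  intros nb x. rewrite invinv. split; intro q.
  - apply nb. gsimpl. exact q.
  - apply nb in q. revert q. gsimpl. auto.
Qed.

End Fin.

Theorem lemma5p1 (H : Group) (K : H -> Prop) (phi : H -> H)
  (HK : is_subgroup K) (HKp : proper K) (Hphi : is_aut phi)
  (G : Group) (iH : H -> G) (t : G) (HG : is_HNN H K phi G iH t) :
  (forall b, normalizer K b ->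
     exists f, is_alpha iH t (gam b) (b^-1 * phi b) f /\ is_aut f /\
               in_OutHV K phi iH t f) /\
  (forall b c fb fc fbc, normalizer K b -> normalizer K c ->
     is_alpha iH t (gam b) (b^-1 * phi b) fb ->
     is_alpha iH t (gam c) (c^-1 * phi c) fc ->
     is_alpha iH t (gam (b * c)) ((b * c)^-1 * phi (b * c)) fbc ->
     out_eq fbc (fun x => fc (fb x))) /\
  (forall b fb, normalizer K b ->
     is_alpha iH t (gam b) (b^-1 * phi b) fb ->
     (is_inner fb <-> prodset (Jset phi) K b)).
Proof.
  destruct Hphi as [phi_hom [phiinv [pl pr]]].
  assert (hiH := iH_hom H K phi G iH t HG).
  split; [|split].
  - intros b nb. destruct (alpha_b_exists H K phi phi_hom G iH t HG b nb) as [f af].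
    destruct (alpha_b_exists H K phi phi_hom G iH t HG (b^-1) (normalizer_inv H K b nb)) as [f' af'].
    exists f. split; [exact af|]. split.
    + split; [apply af|]. exists f'. split.
      * apply (alpha_inv_id H K phi phi_hom G iH t HG b f f' af af').
      * apply (alpha_inv_id' H K phi phi_hom G iH t HG b f f' af af').
    + exists b, (b^-1 * phi b), f. split; [exact nb|]. split; [|split; [exact af|split]].
      * intros k hk. rewrite mulKV, mulVr, gmul1, mulr1. reflexivity.
      * split; [apply af|]. exists f'. split.
        -- apply (alpha_inv_id H K phi phi_hom G iH t HG b f f' af af').
        -- apply (alpha_inv_id' H K phi phi_hom G iH t HG b f f' af af').
      * exists 1. intro x. rewrite gam1. reflexivity.
  - intros b c fb fc fbc nb nc ab ac abc. exists 1. intro x. rewrite gam1.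
    apply (alpha_unique H K phi G iH t HG _ _ _ _ _ _ abc (alpha_comp H K phi phi_hom G iH t HG b c fb fc ab ac)); reflexivity.
  - intros b fb nb ab. split.
    + intros [c hc]. apply (kernel_hard H K phi phiinv HK phi_hom pl pr G iH t HG b c HKp).
      * intro h. destruct ab as [_ [Hb _]]. transitivity (fb (iH h)); [rewrite hc; reflexivity | apply Hb].
      * destruct ab as [_ [_ Tb]]. transitivity (fb t); [rewrite hc; reflexivity | apply Tb].
    + intros [j [k [[cj fj] [hk Eb]]]]. exists (iH k).
      assert (ak : is_alpha iH t (gam k) (k^-1 * phi k) (gam (iH k))).
      { split; [apply gam_hom|split].
        - intro h. unfold gam. rewrite !hiH, (homV _ hiH). reflexivity.
        - unfold gam. rewrite hiH, (homV _ hiH).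
          rewrite <- (t_rel H K phi G iH t HG k hk). gsimpl. reflexivity. }
      apply (alpha_unique H K phi G iH t HG _ _ _ _ _ _ ab ak).
      * intro h. f_equal. unfold gam. rewrite Eb. gsimpl.
        rewrite (gmulA _ h j), <- cj. gsimpl. reflexivity.
      * f_equal. rewrite Eb, phi_hom, fj. gsimpl. reflexivity.
Qed.
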